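(* Let $1\le D\le n-1$ and $1\le x\le D$. There is no deterministic consensus algorithm for $n$ processes (even one that knows $n$, $D$ and $x$) that solves consensus under the message adversary $\lozenge\mathrm{STABLE}_D(x)$. This remains true even for the smaller message adversary consisting of those sequences in $\lozenge\mathrm{STABLE}_D(x)$ whose first $D$ graphs $\mathcal{G}^1,\dots,\mathcal{G}^D$ form an $R$-rooted sequence for some set $R\subseteq\Pi$, where $R$ is not known to the processes a priori.
   Context: Model: a finite set $\Pi$ of $n$ processes with unique identifiers, which never fail and run in lock-step synchronous rounds $r=1,2,\dots$; in each round every process sends a message to every other process, receives some of them, and makes a local state transition. The round-$r$ communication graph $\mathcal{G}^r$ is a directed graph on $\Pi$ with edge $(p\to q)$ iff $q$ receives $p$'s round-$r$ message; all self-loops are always present. A message adversary is a set of infinite sequences of communication graphs (the admissible sequences); an algorithm solves consensus under a message adversary if for every assignment of inputs and every admissible sequence the run satisfies: Termination (every process eventually irrevocably decides), Agreement (all decisions are equal), Validity (every decision is some process's input). A root component of a graph $\mathcal{G}$ is a nonempty $R\subseteq\Pi$ that is the vertex set of a strongly connected component of $\mathcal{G}$ with no edge $(p\to q)$, $q\in R$, $p\notin R$. A graph is rooted if it has exactly one root component $\operatorname{Root}(\mathcal{G})$. A nonempty sequence of consecutive graphs is $R$-rooted if each graph in it is rooted with root component $R$. Compound graph: $(p,q)\in\mathcal{G}\circ\mathcal{G}'$ iff $(p,p')\in\mathcal{G}$ and $(p',q)\in\mathcal{G}'$ for some $p'$. Causal past: $\mathrm{CP}_p(a,a)=\{p\}$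 and, for $a<b$, $\mathrm{CP}_p(a,b)$ is the set of in-neighbours of $p$ in $\mathcal{G}^{a+1}\circ\cdots\circ\mathcal{G}^b$. $\mathrm{DIAM}(D)$: all sequences such that for every subsequence $\mathcal{G}^{r_1},\dots,\mathcal{G}^{r_1+D-1}$ of $D$ consecutive graphs that is $R$-rooted, $R\subseteq \mathrm{CP}_p(r_1-1,r_1+D-1)$ for every $p\in\Pi$. $\lozenge\mathrm{STABILITY}(x)$: all sequences containing, for some $R\subseteq\Pi$, an $R$-rooted subsequence of at least $x$ consecutive graphs. $\mathrm{ROOTED}$: all sequences in which every graph is rooted. $\lozenge\mathrm{STABLE}_D(x)=\mathrm{ROOTED}\cap\lozenge\mathrm{STABILITY}(x)\cap\mathrm{DIAM}(D)$. *)

(* Defs.v *)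
From mathcomp Require Import all_boot.
Set Implicit Arguments. Unset Strict Implicit. Unset Printing Implicit Defensive.

Section Model.
Variable n : nat.
Notation proc := 'I_n.

(* A communication graph: [G p q] iff (p -> q), i.e. q receives p's message. *)
Definition graph := rel proc.
(* A graph sequence; round r (r >= 1) uses graph [g r]; [g 0] is unused. *)
Definition gseq := nat -> graph.

Definition isRootComp (G : graph) (R : {set proc}) : Prop :=
  (exists p, R = [set q | connect G p q && connect G q p]) /\
  (forall u v, G u v -> v \in R -> u \in R).

Definition rootedWith (G : graph) (R : {set proc}) : Prop :=
  isRootComp G R /\ forall R', isRootComp G R' -> R' = R.

Definition rooted (G : graph) : Prop := exists R, rootedWith G R.

Definition rootedBlock (g : gseq) (R : {set proc}) (a len : nat) : Prop :=
  0 < len /\ forall i, i < len -> rootedWith (g (a + i)) R.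

Fixpoint compound (g : gseq) (a k : nat) : rel proc :=
  match k with
  | 0 => fun u v => u == v
  | k'.+1 => fun u v => [exists w, compound g a k' u w && g (a + k'.+1) w v]
  end.

(* causal past CP_p(a,b), for a <= b *)
Definition CP (g : gseq) (p : proc) (a b : nat) : {set proc} :=
  [set q | compound g a (b - a) q p].

Definition selfLoops (g : gseq) : Prop := forall r p, 1 <= r -> g r p p.

Definition DIAM (D : nat) (g : gseq) : Prop :=
  forall r1 R, 1 <= r1 -> rootedBlock g R r1 D ->
    forall p, R \subset CP g p (r1 - 1) (r1 + D - 1).

Definition EvStability (x : nat) (g : gseq) : Prop :=
  exists R r k, 1 <= r /\ x <= k /\ rootedBlock g R r k.

Definition ROOTED (g : gseq) : Prop := forall r, 1 <= r -> rooted (g r).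

Definition EvSTABLE (D x : nat) (g : gseq) : Prop :=
  selfLoops g /\ ROOTED g /\ EvStability x g /\ DIAM D g.

Definition EvSTABLE_first (D x : nat) (g : gseq) : Prop :=
  EvSTABLE D x g /\ exists R, rootedBlock g R 1 D.

Record algorithm (V S M : Type) := Algorithm {
  init : proc -> V -> S;
  send : proc -> S -> proc -> M;                (* sender, state, recipient *)
  trans : proc -> S -> (proc -> option M) -> S;  (* None = not received *)
  dec : proc -> S -> option V                    (* current output *)
}.

Section Run.
Variables (V S M : Type) (A : algorithm V S M) (inp : proc -> V) (g : gseq).

Fixpoint state (r : nat) : proc -> S :=
  match r with
  | 0 => fun p => init A p (inp p)
  | r'.+1 => fun p =>
      trans A p (state r' p)
        (fun q => if g r q p then Some (send A q (state r' q) p) else None)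
  end.

(* p (irrevocably) decides v: the first output of p is v *)
Definition decides (p : proc) (v : V) : Prop :=
  exists r, dec A p (state r p) = Some v /\
            forall r', r' < r -> dec A p (state r' p) = None.

Definition consensus_run : Prop :=
  (forall p, exists v, decides p v) /\
  (forall p q v w, decides p v -> decides q w -> v = w) /\
  (forall p v, decides p v -> exists q, inp q = v).
End Run.

Definition solves_consensus (V S M : Type) (A : algorithm V S M)
    (MA : gseq -> Prop) : Prop :=
  forall (inp : proc -> V) (g : gseq), MA g -> consensus_run A inp g.

End Model.

(* Main.v *)
Require Import Defs.
From mathcomp Require Import all_boot.
From mathcomp Require Import zify.
From Stdlib Require Import FunctionalExtensionality ClassicalEpsilon Classical.
Set Implicit Arguments. Unset Strict Implicit. Unset Printing Implicit Defensive.

Section Gen.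
Variable m : nat.

Lemma back_closed (G : graph m) (R : {set 'I_m}) :
  (forall u v, G u v -> v \in R -> u \in R) ->
  forall q r, connect G q r -> r \in R -> q \in R.
Proof.
move=> clo q r /connectP [s Hp ->]; elim: s q Hp => [|y s IH] q //= /andP [Gqy Hp] Hl.
exact: (clo q y Gqy (IH y Hp Hl)).
Qed.

Lemma rooted_of (G : graph m) (R : {set 'I_m}) p :
  p \in R -> (forall u v, u \in R -> connect G u v) ->
  (forall u v, G u v -> v \in R -> u \in R) -> rootedWith G R.
Proof.
move=> pR reach clo.
have back := back_closed clo.
split.
  split=> //; exists p; apply/setP => q; rewrite inE.
  apply/idP/andP => [qR|[c1 c2]]; first by split; apply: reach.
  exact: back c2 pR.
move=> R' [[p' ->] clo'].
have back' := back_closed clo'.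
have p'R' : p' \in [set q | connect G p' q && connect G q p'] by rewrite inE connect0.
have pR' := back' _ _ (reach p p' pR) p'R'.
move: (pR'); rewrite inE => /andP [cp'p _].
apply/setP => q; rewrite inE; apply/andP/idP => [[c1 c2]|qR].
  exact: back _ _ (connect_trans c2 cp'p) pR.
split; first exact: connect_trans cp'p (reach _ _ pR).
exact: reach.
Qed.

Lemma rooted_uniq (G : graph m) R R' : rootedWith G R -> rootedWith G R' -> R' = R.
Proof. by move=> [_ H] [H' _]; apply: H. Qed.

Lemma comp_refl (g : gseq m) a k u : (forall r w, g r w w) -> compound g a k u u.
Proof.
move=> refl; elim: k => [|k IH] /=; first by [].
by apply/existsP; exists u; rewrite IH refl.
Qed.

Lemma comp_S (g : gseq m) a k u w v :
  compound g a k u w -> g (a + k.+1) w v -> compound g a k.+1 u v.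
Proof. by move=> H1 H2 /=; apply/existsP; exists w; rewrite H1 H2. Qed.

Lemma comp_pad (g : gseq m) a k j u v : (forall r w, g r w w) ->
  compound g a k u v -> compound g a (k + j) u v.
Proof.
move=> refl H; elim: j => [|j IH]; first by rewrite addn0.
rewrite addnS; exact: comp_S IH (refl _ _).
Qed.

Lemma comp_connect (g : gseq m) (G : graph m) a k u v :
  (forall i, 0 < i <= k -> forall x y, g (a + i) x y -> G x y) ->
  compound g a k u v -> connect G u v.
Proof.
elim: k v => [|k IH] v Hs /=; first by move/eqP ->.
case/existsP => w /andP [H1 H2].
have e2 : G w v by apply: (Hs k.+1) H2; rewrite ltnSn.
apply: connect_trans (IH w _ H1) (connect1 e2).
move=> i /andP [i0 ik]; apply: Hs; rewrite i0 /=; exact: leqW.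
Qed.

Lemma comp_le (g : gseq m) a k K u v : (forall r w, g r w w) -> k <= K ->
  compound g a k u v -> compound g a K u v.
Proof. by move=> refl h H; rewrite -(subnKC h); apply: comp_pad. Qed.

End Gen.

Inductive letter := LA | LB | LC.
Inductive bk := BX0 | BXb | BY1.

Section Graphs.
Variables (n' D : nat).
Local Notation N := n'.+2.
Hypothesis D1 : 0 < D.
Hypothesis DN : D < N.

Definition pr (k : nat) : 'I_N := inord k.
Lemma prK (u : 'I_N) : pr u = u.
Proof. exact: inord_val. Qed.
Lemma val_pr k : k < N -> nat_of_ord (pr k) = k.
Proof. exact: inordK. Qed.

Definition pE (u v : 'I_N) := (u <= D) && (v <= D) && ((u.+1 == v) || (v.+1 == u)).
Definition extra (u v : 'I_N) := (u <= D) && (D < v).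

Definition gblk (b : bk) : graph N := fun (u v : 'I_N) =>
  match b with
  | BX0 => (u == v) || (pE u v && (nat_of_ord v != 0)) || extra u v
  | BXb => (u == v) || pE u v || extra u v
  | BY1 => (u == v) || (pE u v && (nat_of_ord v != D)) || extra u v
  end.

Definition rblk (b : bk) : {set 'I_N} :=
  match b with
  | BX0 => [set u : 'I_N | nat_of_ord u == 0]
  | BXb => [set u : 'I_N | u <= D]
  | BY1 => [set u : 'I_N | nat_of_ord u == D]
  end.

Definition glet (t : letter) : graph N := fun (u v : 'I_N) =>
  match t with
  | LA => (u == v) || (nat_of_ord u == 0)
  | LB => (u == v) || (nat_of_ord u == D)
  | LC => (u == v) || (nat_of_ord u == 0) || (nat_of_ord u == D)
  end.

Definition rlet (t : letter) : {set 'I_N} :=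
  match t with
  | LA => [set u : 'I_N | nat_of_ord u == 0]
  | LB => [set u : 'I_N | nat_of_ord u == D]
  | LC => [set u : 'I_N | (nat_of_ord u == 0) || (nat_of_ord u == D)]
  end.

Definition run (b : bk) (s : nat -> letter) : gseq N :=
  fun r => if r <= D then gblk b else glet (s (r - D.+1)).

Lemma gblk_refl b u : gblk b u u.
Proof. by case: b; rewrite /= eqxx. Qed.
Lemma glet_refl t u : glet t u u.
Proof. by case: t; rewrite /= eqxx. Qed.
Lemma run_refl b s r u : run b s r u u.
Proof. rewrite /run; case: ifP => _; [exact: gblk_refl | exact: glet_refl]. Qed.

Lemma blk_extra b (u v : 'I_N) : u <= D -> D < v -> gblk b u v.
Proof. by move=> h1 h2; case: b; rewrite /= /extra h1 h2 !orbT. Qed.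

Lemma blk_up b j : b <> BY1 -> j < D -> gblk b (pr j) (pr j.+1).
Proof.
move=> hb jD; have jN : j < N by lia.
have jN' : j.+1 < N by lia.
case: b hb => //= _; rewrite /pE !val_pr // (ltnW jD) jD eqxx /= ?orbT //.
Qed.

Lemma blk_down b j : b <> BX0 -> j < D -> gblk b (pr j.+1) (pr j).
Proof.
move=> hb jD; have jN : j < N by lia.
have jN' : j.+1 < N by lia.
case: b hb => //= _; rewrite /pE !val_pr // (ltnW jD) jD eqxx /= ?orbT //.
by rewrite neq_ltn jD orbT.
Qed.

Lemma run_blk b s r : 0 < r <= D -> run b s r = gblk b.
Proof. by case/andP=> _ h; rewrite /run h. Qed.
Lemma run_let b s r : D < r -> run b s r = glet (s (r - D.+1)).
Proof. by move=> h; rewrite /run leqNgt h. Qed.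

Lemma upwalk b s k i : b <> BY1 -> i + k <= D ->
  compound (run b s) 0 k (pr i) (pr (i + k)).
Proof.
move=> hb; elim: k => [|k IH] h; first by rewrite addn0 /= eqxx.
apply: (comp_S (w := pr (i + k))); first by apply: IH; lia.
rewrite add0n run_blk; last by lia.
rewrite addnS; apply: blk_up => //; lia.
Qed.

Lemma downwalk b s k i : b <> BX0 -> k <= i -> i <= D ->
  compound (run b s) 0 k (pr i) (pr (i - k)).
Proof.
move=> hb; elim: k => [|k IH] h1 h2; first by rewrite subn0 /= eqxx.
apply: (comp_S (w := pr (i - k))); first by apply: IH => //; lia.
rewrite add0n run_blk; last by lia.
have -> : i - k = (i - k.+1).+1 by lia.
apply: blk_down => //; lia.
Qed.

Lemma blk_reach b s q p : q \in rblk b -> compound (run b s) 0 D q p.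
Proof.
move=> qR.
have qD : q <= D by case: b qR => /=; rewrite inE; [move/eqP->|done|move/eqP->].
have rr := @run_refl b s.
case: (leqP (nat_of_ord p) D) => pD; last first.
  apply: (comp_le (k := 1)) => //.
  apply: (comp_S (w := q)) => //=.
  rewrite run_blk; last by lia.
  exact: blk_extra.
rewrite -(prK q) -(prK p).
move: rr; case: b qR => /=; rewrite inE.
- move/eqP => q0 rr; rewrite q0.
  apply: (comp_le (k := p)) => //.
  by have := @upwalk BX0 s p 0 ltac:(by []) ltac:(lia).
- move=> _ rr; case: (leqP (nat_of_ord q) p) => qp.
    apply: (comp_le (k := p - q)) => //; first lia.
    have := @upwalk BXb s (p - q) q ltac:(by []) ltac:(lia).
    by have -> : q + (p - q) = p by lia.
  apply: (comp_le (k := q - p)) => //; first lia.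
  have := @downwalk BXb s (q - p) q ltac:(by []) ltac:(lia) ltac:(lia).
  by have -> : q - (q - p) = p by lia.
- move/eqP => qe rr; rewrite qe.
  apply: (comp_le (k := D - p)) => //; first lia.
  have := @downwalk BY1 s (D - p) D ltac:(by []) ltac:(lia) (leqnn _).
  by have -> : D - (D - p) = p by lia.
Qed.

Lemma let_reach t q p : q \in rlet t -> glet t q p.
Proof.
case: t; rewrite /= inE; first (by move=> ->; rewrite orbT); first (by move=> ->; rewrite orbT).
by case/orP => ->; rewrite ?orbT.
Qed.

Lemma blk_rooted b : rootedWith (gblk b) (rblk b).
Proof.
apply: (@rooted_of _ _ _ (match b with BY1 => pr D | _ => pr 0 end)).
- by case: b; rewrite inE val_pr //; lia.
- move=> u v uR; apply: (comp_connect (g := run b (fun _ => LA)) (a := 0) (k := D)).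
    by move=> i hi x y; rewrite add0n run_blk.
  exact: blk_reach.
- move=> u v; case: b; rewrite /= !inE /pE /extra.
  + move=> H /eqP v0; move: H; rewrite v0 eqxx andbF orbF ltn0 andbF orbF.
    by move/eqP => ->; rewrite v0.
  + by move=> /orP [/orP [/eqP -> //|/andP [/andP [-> _] _]]|/andP [_ ]] //; lia.
  + move=> H /eqP vD; move: H; rewrite vD eqxx andbF orbF ltnn andbF orbF.
    by move/eqP => ->; rewrite vD.
Qed.

Lemma let_rooted t : rootedWith (glet t) (rlet t).
Proof.
apply: (@rooted_of _ _ _ (match t with LB => pr D | _ => pr 0 end)).
- by case: t; rewrite inE val_pr // ?eqxx ?orbT //; lia.
- by move=> u v uR; apply: connect1; apply: let_reach.
- move=> u v; case: t; rewrite /= !inE.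
  + by case/orP => [/eqP ->|->].
  + by case/orP => [/eqP ->|->].
  + by case/orP => [/orP [/eqP ->|->]|->] //; rewrite orbT.
Qed.



Lemma adm b s x : x <= D -> EvSTABLE_first D x (run b s).
Proof.
move=> xD.
have blkR : rootedBlock (run b s) (rblk b) 1 D.
  split=> // i iD; rewrite run_blk; [exact: blk_rooted | lia].
split; last by exists (rblk b).
split; first by move=> r p _; exact: run_refl.
split.
  move=> r r1; case: (leqP r D) => rD.
    by exists (rblk b); rewrite run_blk; [exact: blk_rooted|lia].
  by exists (rlet (s (r - D.+1))); rewrite run_let //; exact: let_rooted.
split; first by exists (rblk b), 1, D.
move=> r1 R h1 [_ HB] p.
case: (eqVneq r1 1) => [e1|r1n].
  rewrite e1 in HB *.
  have := HB 0 D1; rewrite addn0 run_blk; last by lia.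
  move=> HR.
  rewrite (rooted_uniq (blk_rooted b) HR).
  apply/subsetP => q qR; rewrite inE.
  have -> : 1 + D - 1 - (1 - 1) = D by lia.
  exact: blk_reach.
have := HB D.-1 ltac:(lia); rewrite run_let; last by lia.
move=> HR; rewrite (rooted_uniq (let_rooted _) HR).
apply/subsetP => q qR; rewrite inE.
have -> : r1 + D - 1 - (r1 - 1) = D.-1.+1 by lia.
apply: (comp_S (w := q)); first by apply: comp_refl; exact: run_refl.
have -> : r1 - 1 + D.-1.+1 = r1 + D.-1 by lia.
rewrite run_let; last by lia.
exact: let_reach.
Qed.



Section Algo.
Variables (x : nat) (V S M : Type) (A : algorithm N V S M) (v0 v1 : V).
Hypothesis xD : x <= D.
Hypothesis v01 : v0 <> v1.
Hypothesis sol : solves_consensus A (EvSTABLE_first D x).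

Definition p0 := pr 0.
Definition pD := pr D.
Lemma val_p0 : nat_of_ord p0 = 0. Proof. by rewrite val_pr. Qed.
Lemma val_pD : nat_of_ord pD = D. Proof. by rewrite val_pr. Qed.
Lemma eq_p0 (u : 'I_N) : (nat_of_ord u == 0) = (u == p0).
Proof. by rewrite -val_eqE /= val_p0. Qed.
Lemma eq_pD (u : 'I_N) : (nat_of_ord u == D) = (u == pD).
Proof. by rewrite -val_eqE /= val_pD. Qed.

Lemma cons b s I : consensus_run A I (run b s).
Proof. exact: sol (adm b s xD). Qed.

Definition Val I b s v := decides A I (run b s) p0 v.
Definition val I b s := epsilon (inhabits v0) (Val I b s).

Lemma val_spec I b s : Val I b s (val I b s).
Proof.
apply: epsilon_spec; have [T _] := cons b s I; exact: T.
Qed.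

Lemma val_dec I b s z w : decides A I (run b s) z w -> w = val I b s.
Proof.
move=> H; have [_ [Ag _]] := cons b s I.
exact: (Ag z p0 w (val I b s) H (val_spec I b s)).
Qed.

Lemma dec_transfer I I' g g' z w :
  (forall r, state A I g r z = state A I' g' r z) ->
  decides A I g z w -> decides A I' g' z w.
Proof.
move=> E [r [H1 H2]]; exists r; rewrite -E; split=> // r' h; rewrite -E; exact: H2.
Qed.

Lemma link I b s I' b' s' z :
  (forall r, state A I (run b s) r z = state A I' (run b' s') r z) ->
  val I b s = val I' b' s'.
Proof.
move=> E; have [T _] := cons b s I; have [w Hw] := T z.
rewrite -(val_dec Hw); apply: val_dec; exact: dec_transfer Hw.
Qed.

Lemma step_eq I I' (g g' : gseq N) r p :
  (forall q, g r.+1 q p = g' r.+1 q p) ->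
  state A I g r p = state A I' g' r p ->
  (forall q, g r.+1 q p -> state A I g r q = state A I' g' r q) ->
  state A I g r.+1 p = state A I' g' r.+1 p.
Proof.
move=> H1 H2 H3 /=; rewrite H2; congr (trans A p _ _).
apply: functional_extensionality => q; rewrite -H1.
by case: ifP => // h; rewrite H3.
Qed.

Lemma state_prefix I (g g' : gseq N) K :
  (forall r, r <= K -> g r = g' r) ->
  forall r, r <= K -> forall p, state A I g r p = state A I g' r p.
Proof.
move=> E; elim=> [|r IH] h p //.
apply: step_eq => [q|//|q _]; first by rewrite E.
- by apply: IH; lia.
- by apply: IH; lia.
Qed.

Lemma iso I I' (g g' : gseq N) z r0 :
  state A I g r0 z = state A I' g' r0 z ->
  (forall r q, r0 < r -> g r q z = (q == z)) ->
  (forall r q, r0 < r -> g' r q z = (q == z)) ->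
  forall r, r0 <= r -> state A I g r z = state A I' g' r z.
Proof.
move=> E0 H H'; elim=> [|r IH] h.
  by move: h; rewrite leqn0 => /eqP <-.
case: (leqP r0 r) => h'; last first.
  by have -> : r.+1 = r0 by lia.
apply: step_eq.
- by move=> q; rewrite H ?H' //; lia.
- exact: IH h'.
- by move=> q; rewrite H; [move/eqP ->; exact: IH h' | lia].
Qed.



Lemma in_X0 q : gblk BX0 q p0 = (q == p0).
Proof. by rewrite /= /extra !val_p0 ltn0 !andbF !orbF. Qed.
Lemma in_Y1 q : gblk BY1 q pD = (q == pD).
Proof. by rewrite /= /extra !val_pD ltnn eqxx !andbF !orbF. Qed.
Lemma in_LA q : glet LA q p0 = (q == p0).
Proof. by rewrite /= eq_p0 orbb. Qed.
Lemma in_LB q : glet LB q pD = (q == pD).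
Proof. by rewrite /= eq_pD orbb. Qed.
Lemma in_AC q : glet LA q pD = glet LC q pD.
Proof. by rewrite /= eq_pD eq_p0; case: (q == pD); case: (q == p0). Qed.
Lemma in_BC q : glet LB q p0 = glet LC q p0.
Proof. by rewrite /= eq_pD eq_p0; case: (q == pD); case: (q == p0). Qed.

Definition sA : nat -> letter := fun _ => LA.
Definition sB : nat -> letter := fun _ => LB.

Lemma isoA b s r q : D < r -> (forall i, s i = LA) -> run b s r q p0 = (q == p0).
Proof. by move=> h hs; rewrite run_let // hs in_LA. Qed.
Lemma isoB b s r q : D < r -> (forall i, s i = LB) -> run b s r q pD = (q == pD).
Proof. by move=> h hs; rewrite run_let // hs in_LB. Qed.

Lemma isoX0 r q : 0 < r -> run BX0 sA r q p0 = (q == p0).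
Proof.
move=> h; case: (leqP r D) => h'; last exact: isoA.
by rewrite run_blk ?in_X0 //; lia.
Qed.
Lemma isoY1 r q : 0 < r -> run BY1 sB r q pD = (q == pD).
Proof.
move=> h; case: (leqP r D) => h'; last exact: isoB.
by rewrite run_blk ?in_Y1 //; lia.
Qed.

Lemma cone1 I s : forall r, r <= D -> forall j, r <= j -> j <= D ->
  state A I (run BX0 s) r (pr j) = state A I (run BXb s) r (pr j).
Proof.
elim=> [|r IH] rD j h1 h2 //.
have jN : j < N by lia.
apply: step_eq.
- move=> q; rewrite !run_blk; try lia.
  by rewrite /= val_pr // (_ : (j != 0) = true) ?andbT //; apply/eqP; lia.
- apply: IH; lia.
- move=> q; rewrite run_blk; last lia.
  rewrite /= /pE /extra val_pr //.
  case/orP => [/orP [/eqP ->|/andP [/andP [/andP [qD _] hq] _]]|/andP [_ hh]].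
  + apply: IH; lia.
  + have rq : r <= q by case/orP: hq => /eqP; lia.
    rewrite -(prK q); apply: IH; lia.
  + lia.
Qed.

Lemma cone2 I s : forall r, r <= D -> forall j, j + r <= D ->
  state A I (run BXb s) r (pr j) = state A I (run BY1 s) r (pr j).
Proof.
elim=> [|r IH] rD j h1 //.
have jN : j < N by lia.
apply: step_eq.
- move=> q; rewrite !run_blk; try lia.
  by rewrite /= val_pr // (_ : (j != D) = true) ?andbT //; apply/eqP; lia.
- apply: IH; lia.
- move=> q; rewrite run_blk; last lia.
  rewrite /= /pE /extra val_pr //.
  case/orP => [/orP [/eqP ->|/andP [/andP [qD _] hq]]|/andP [_ hh]].
  + apply: IH; lia.
  + have rq : j <= q + 1 by case/orP: hq => /eqP; lia.
    rewrite -(prK q); apply: IH; lia.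
  + lia.
Qed.



Definition J : 'I_N -> V := fun p => if p == p0 then v0 else v1.

Definition Biv I b k s := exists s1 s2, (forall i, i < k -> s1 i = s i) /\
  (forall i, i < k -> s2 i = s i) /\ val I b s1 <> val I b s2.

Lemma val_const w b s : val (fun _ => w) b s = w.
Proof.
have [_ [_ Va]] := cons b s (fun _ => w).
by have [q <-] := Va _ _ (val_spec (fun _ => w) b s).
Qed.

Lemma init_biv : exists I b, Biv I b 0 sA.
Proof.
apply: NNPP => H.
have nb : forall I b s1 s2, val I b s1 = val I b s2.
  move=> I b s1 s2; apply: NNPP => hne; apply: H; exists I, b, s1, s2; by split.
have e1 : val (fun _ => v0) BX0 sA = val J BX0 sA.
  apply: (link (z := p0)) => r.
  apply: (iso (r0 := 0)) => //=; first by rewrite /J eqxx.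
  - by move=> r' q h; apply: isoX0.
  - by move=> r' q h; apply: isoX0.
have e3 : val J BX0 sB = val J BXb sB.
  apply: (link (z := pD)) => r.
  case: (leqP r D) => h; first by apply: cone1.
  apply: (iso (r0 := D)); last exact: ltnW.
  - exact: cone1.
  - by move=> r' q h'; apply: isoB.
  - by move=> r' q h'; apply: isoB.
have e5 : val J BXb sA = val J BY1 sA.
  apply: (link (z := p0)) => r.
  case: (leqP r D) => h; first by apply: cone2; lia.
  apply: (iso (r0 := D)); last exact: ltnW.
  - by apply: cone2; lia.
  - by move=> r' q h'; apply: isoA.
  - by move=> r' q h'; apply: isoA.
have e7 : val J BY1 sB = val (fun _ => v1) BY1 sB.
  apply: (link (z := pD)) => r.
  apply: (iso (r0 := 0)) => //=.
  - rewrite /J; case: eqP => // h.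
    by have := val_pD; rewrite h val_p0; lia.
  - by move=> r' q h; apply: isoY1.
  - by move=> r' q h; apply: isoY1.
apply: v01.
rewrite -(val_const v0 BX0 sA) e1 (nb J BX0 sA sB) e3 (nb J BXb sB sA) e5.
by rewrite (nb J BY1 sA sB) e7 val_const.
Qed.

Definition upd k (s : nat -> letter) t := fun i => if i < k then s i else t.
Definition cont k (s : nat -> letter) t u :=
  fun i => if i < k then s i else if i == k then t else u.

Lemma agree_run b s1 s2 k : (forall i, i < k -> s1 i = s2 i) ->
  forall r, r <= D + k -> run b s1 r = run b s2 r.
Proof.
move=> E r h; rewrite /run; case: ifP => // h'; rewrite E //; lia.
Qed.

Lemma link_free I b k s t1 t2 u z :
  (forall q, glet t1 q z = glet t2 q z) -> (forall q, glet u q z = (q == z)) ->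
  val I b (cont k s t1 u) = val I b (cont k s t2 u).
Proof.
move=> Ht Hu; apply: (link (z := z)) => r.
have pre : forall r, r <= D + k -> forall p,
    state A I (run b (cont k s t1 u)) r p = state A I (run b (cont k s t2 u)) r p.
  apply: state_prefix => r' h; apply: agree_run h => i hi.
  by rewrite /cont hi.
case: (leqP r (D + k)) => h; first exact: pre.
have E : state A I (run b (cont k s t1 u)) (D + k).+1 z =
         state A I (run b (cont k s t2 u)) (D + k).+1 z.
  apply: step_eq.
  - move=> q; rewrite !run_let; try lia.
    have -> : (D + k).+1 - D.+1 = k by lia.
    by rewrite /cont ltnn eqxx.
  - exact: pre.
  - by move=> q _; apply: pre.
apply: (iso (r0 := (D + k).+1)) E _ _ r h.
- move=> r' q h'; rewrite run_let; last lia.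
  rewrite /cont (_ : (r' - D.+1 < k) = false); last by apply/negbTE; rewrite -leqNgt; lia.
  rewrite (_ : (r' - D.+1 == k) = false) //; apply/negbTE; apply/eqP; lia.
- move=> r' q h'; rewrite run_let; last lia.
  rewrite /cont (_ : (r' - D.+1 < k) = false); last by apply/negbTE; rewrite -leqNgt; lia.
  rewrite (_ : (r' - D.+1 == k) = false) //; apply/negbTE; apply/eqP; lia.
Qed.

Lemma biv_step I b k s : Biv I b k s -> exists t, Biv I b k.+1 (upd k s t).
Proof.
move=> [s1 [s2 [a1 [a2 hne]]]].
apply: NNPP => H.
have nb : forall t s1 s2, (forall i, i < k.+1 -> s1 i = upd k s t i) ->
    (forall i, i < k.+1 -> s2 i = upd k s t i) -> val I b s1 = val I b s2.
  move=> t s1' s2' h1 h2; apply: NNPP => hn; apply: H; exists t, s1', s2'; by split.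
have cv : forall t u s', (forall i, i < k -> s' i = s i) -> s' k = t ->
    val I b s' = val I b (cont k s t u).
  move=> t u s' h1 h2; apply: (nb t).
  - move=> i hi; rewrite /upd; case: ifP => hik; first exact: h1.
    by have -> : i = k by lia.
  - move=> i hi; rewrite /upd /cont; case: ifP => hik //.
    have e : i = k by lia.
    by rewrite e eqxx.
have all : forall s', (forall i, i < k -> s' i = s i) ->
    val I b s' = val I b (cont k s LC LA).
  move=> s' h; case E: (s' k).
  - rewrite (cv LA LB s' h E) (@link_free I b k s LA LC LB pD in_AC in_LB).
    apply: cv => //; first by move=> i hi; rewrite /cont hi.
    by rewrite /cont ltnn eqxx.
  - rewrite (cv LB LA s' h E).
    exact: (@link_free I b k s LB LC LA p0 in_BC in_LA).
  - exact: cv.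
by apply: hne; rewrite (all _ a1) (all _ a2).
Qed.

Fixpoint fseq I b k : nat -> letter :=
  match k with
  | 0 => sA
  | k'.+1 => upd k' (fseq I b k')
      (epsilon (inhabits LA) (fun t => Biv I b k'.+1 (upd k' (fseq I b k') t)))
  end.

Lemma biv_limit I b : Biv I b 0 sA -> False.
Proof.
move=> H0.
have inv : forall k, Biv I b k (fseq I b k).
  elim=> [|k IH] //=.
  exact: (epsilon_spec (inhabits LA) (fun t => Biv I b k.+1 (upd k (fseq I b k) t)) (biv_step IH)).
have coh : forall k i, i < k -> fseq I b k i = fseq I b i.+1 i.
  elim=> [|k IH] i hi //.
  rewrite {1}/fseq -/fseq /upd; case: ifP => h; first exact: IH.
  have e : i = k by lia.
  by rewrite e /= /upd ltnn.
pose st i := fseq I b i.+1 i.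
have [T _] := cons b st I.
have [v [r [Hr Hpre]]] := T p0.
have [s1 [s2 [a1 [a2 hne]]]] := inv r.
have key : forall s', (forall i, i < r -> s' i = fseq I b r i) -> v = val I b s'.
  move=> s' hs; apply: (val_dec (z := p0)).
  have E : forall r', r' <= D + r -> forall p,
      state A I (run b st) r' p = state A I (run b s') r' p.
    apply: state_prefix => r' h; apply: agree_run h => i hi.
    by rewrite hs // coh.
  exists r; rewrite -E //; last lia.
  split=> // r' h; rewrite -E; [exact: Hpre | lia].
by apply: hne; rewrite -(key _ a1) -(key _ a2).
Qed.

Lemma no_sol : False.
Proof. by have [I [b H]] := init_biv; exact: biv_limit H. Qed.
End Algo. End Graphs.

Theorem theorem2 (n D x : nat) :
  1 <= D <= n - 1 -> 1 <= x <= D ->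
  forall (V : Type), (exists v0 v1 : V, v0 <> v1) ->
  (~ exists (S M : Type) (A : algorithm n V S M),
       solves_consensus A (EvSTABLE D x)) /\
  (~ exists (S M : Type) (A : algorithm n V S M),
       solves_consensus A (EvSTABLE_first D x)).
Proof.
move=> /andP [hD1 hDn] /andP [hx1 hxD] V [v0 [v1 hv]].
have main : forall (S M : Type) (A : algorithm n V S M),
    solves_consensus A (EvSTABLE_first D x) -> False.
  case: n hDn => [|[|n']] hDn; try (exfalso; lia).
  move=> S M A sol.
  exact: (no_sol hD1 (ltac:(lia) : D < n'.+2) hxD hv sol).
split.
  move=> [S [M [A sol]]]; apply: (main S M A) => inp g [Hg _]; exact: sol.
by move=> [S [M [A sol]]]; exact: main sol.
Qed.
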